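(* Let $F$ be a diagonal free self-map of $\mathbb{T}^n$. Then $\mathcal{S}(F)$ contains a Hilbert ball $B_H(z,r)$ with $z\in\mathbb{R}^n$ and $r>0$ if and only if $\underline{\mathrm{cw}}(F)>0$. Moreover, in that case, \[ \sup\{r\ge 0 : \exists z\in\mathbb{R}^n,\ B_H(z,r)\subseteq\mathcal{S}(F)\} = \underline{\mathrm{cw}}(F). \]
   Context: $\mathbb{T}=\mathbb{R}\cup\{-\infty\}$, ordered entrywise on $\mathbb{T}^n$. A self-map $F$ of $\mathbb{T}^n$ is order-preserving if $x\le y\Rightarrow F(x)\le F(y)$, and additively homogeneous if $F(\lambda+x)=\lambda+F(x)$ for all $\lambda\in\mathbb{T}$, $x\in\mathbb{T}^n$. An order-preserving, additively homogeneous self-map $F$ of $\mathbb{T}^n$ is diagonal free if for every $i$ and all $x,y\in\mathbb{R}^n$ with $x_j=y_j$ for all $j\ne i$, $F_i(x)=F_i(y)$. $\mathbf{t}(x)=\max_i x_i$, $\mathbf{b}(x)=\min_i x_i$, $\|x\|_H=\mathbf{t}(x)-\mathbf{b}(x)$ on $\mathbb{R}^n$, $B_H(z,r)=\{x\in\mathbb{R}^n: \|x-z\|_H\le r\}$. $\mathcal{S}(F)=\{x\in\mathbb{T}^n: x\le F(x)\}$. The lower Collatz–Wielandt number is $\underline{\mathrm{cw}}(F)=\sup\{\mu\in\mathbb{R}: \exists z\in\mathbb{R}^n,\ F(z)\ge\mu+z\}$. *)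

(* Defs.v *)
From Stdlib Require Import Reals Lra List Arith.
Import ListNotations.
Open Scope R_scope.

(** T = R ∪ {-∞}, encoded as [option R] with [None] = -∞. *)
Definition Tt := option R.

Definition leT (a b : Tt) : Prop :=
  match a, b with
  | None, _ => True
  | Some _, None => False
  | Some x, Some y => x <= y
  end.

Definition addT (a b : Tt) : Tt :=
  match a, b with
  | Some x, Some y => Some (x + y)
  | _, _ => None
  end.

Definition idx (n : nat) := {i : nat | (i < n)%nat}.

Definition vecT (n : nat) := idx n -> Tt.
Definition vecR (n : nat) := idx n -> R.

Definition leTv {n} (x y : vecT n) : Prop := forall i, leT (x i) (y i).

Definition embed {n} (x : vecR n) : vecT n := fun i => Some (x i).

Definition order_preserving {n} (F : vecT n -> vecT n) : Prop :=
  forall x y, leTv x y -> leTv (F x) (F y).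

Definition add_homogeneous {n} (F : vecT n -> vecT n) : Prop :=
  forall (lam : Tt) (x : vecT n) (i : idx n),
    F (fun j => addT lam (x j)) i = addT lam (F x i).

Definition diagonal_free {n} (F : vecT n -> vecT n) : Prop :=
  order_preserving F /\ add_homogeneous F /\
  forall (i : idx n) (x y : vecR n),
    (forall j, j <> i -> x j = y j) -> F (embed x) i = F (embed y) i.

Definition extv {n} (x : vecR n) (k : nat) : R :=
  match Compare_dec.lt_dec k n with
  | left h => x (exist _ k h)
  | right _ => 0
  end.

(** t(x) = max_i x_i, b(x) = min_i x_i (meaningful for n >= 1). *)
Definition topv {n} (x : vecR n) : R :=
  fold_right Rmax (extv x 0) (map (extv x) (seq 0 n)).
Definition botv {n} (x : vecR n) : R :=
  fold_right Rmin (extv x 0) (map (extv x) (seq 0 n)).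

Definition hnorm {n} (x : vecR n) : R := topv x - botv x.

Definition hball {n} (z : vecR n) (r : R) (x : vecR n) : Prop :=
  hnorm (fun i => x i - z i) <= r.

Definition Sset {n} (F : vecT n -> vecT n) (x : vecT n) : Prop := leTv x (F x).

Definition ball_in_S {n} (F : vecT n -> vecT n) (z : vecR n) (r : R) : Prop :=
  forall x : vecR n, hball z r x -> Sset F (embed x).

Inductive ER := Fin (r : R) | PInf | MInf.

Definition ER_le (a b : ER) : Prop :=
  match a, b with
  | MInf, _ => True
  | _, PInf => True
  | Fin x, Fin y => x <= y
  | _, _ => False
  end.

Definition ER_lt (a b : ER) : Prop := ER_le a b /\ a <> b.

Definition is_sup (A : R -> Prop) (s : ER) : Prop :=
  (forall a, A a -> ER_le (Fin a) s) /\
  (forall u : ER, (forall a, A a -> ER_le (Fin a) u) -> ER_le s u).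

Definition is_lower_cw {n} (F : vecT n -> vecT n) (c : ER) : Prop :=
  is_sup (fun mu => exists z : vecR n,
            leTv (embed (fun i => mu + z i)) (F (embed z))) c.

(* Main.v *)
Require Import Defs.
From Stdlib Require Import Reals Lra Lia List Arith Classical_Prop.
Open Scope R_scope.

Lemma idx_eq {n} (i j : idx n) : proj1_sig i = proj1_sig j -> i = j.
Proof.
  destruct i as [i hi], j as [j hj]; simpl; intros ->.
  f_equal; apply le_unique.
Qed.

Lemma extv_idx {n} (d : vecR n) (i : idx n) : extv d (proj1_sig i) = d i.
Proof.
  unfold extv. destruct (Compare_dec.lt_dec (proj1_sig i) n) as [h|h].
  - f_equal. apply idx_eq. reflexivity.
  - destruct i; simpl in *; lia.
Qed.

Lemma fold_max_le l a b : a <= b -> (forall y, In y l -> y <= b) -> fold_right Rmax a l <= b.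
Proof.
  induction l; simpl; intros; auto.
  apply Rmax_lub; auto.
Qed.

Lemma fold_min_ge l a b : b <= a -> (forall y, In y l -> b <= y) -> b <= fold_right Rmin a l.
Proof.
  induction l; simpl; intros; auto.
  apply Rmin_glb; auto.
Qed.

Lemma le_fold_max l a y : In y l -> y <= fold_right Rmax a l.
Proof.
  induction l; simpl; intros H; [contradiction|].
  destruct H as [<-|H]; [apply Rmax_l|].
  eapply Rle_trans; [apply IHl; auto|apply Rmax_r].
Qed.

Lemma fold_min_le l a y : In y l -> fold_right Rmin a l <= y.
Proof.
  induction l; simpl; intros H; [contradiction|].
  destruct H as [<-|H]; [apply Rmin_l|].
  eapply Rle_trans; [apply Rmin_r|apply IHl; auto].
Qed.

Lemma in_map_extv {n} (d : vecR n) y : In y (map (extv d) (seq 0 n)) ->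
  exists i : idx n, y = d i.
Proof.
  intros H. apply in_map_iff in H. destruct H as [k [<- Hk]].
  apply in_seq in Hk.
  assert (hk : (k < n)%nat) by lia.
  exists (exist _ k hk). rewrite <- extv_idx. reflexivity.
Qed.

Lemma hnorm_bound {n} (d : vecR n) lo hi : lo <= hi ->
  (forall i, lo <= d i <= hi) -> hnorm d <= hi - lo.
Proof.
  intros Hlh H. unfold hnorm, topv, botv.
  destruct n as [|n].
  - simpl. lra.
  - assert (h0 : (0 < S n)%nat) by lia.
    assert (E : extv d 0 = d (exist _ 0%nat h0)).
    { rewrite <- extv_idx. reflexivity. }
    assert (A : fold_right Rmax (extv d 0) (map (extv d) (seq 0 (S n))) <= hi).
    { apply fold_max_le. rewrite E; apply H.
      intros y Hy; destruct (in_map_extv d y Hy) as [i ->]; apply H. }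
    assert (B : lo <= fold_right Rmin (extv d 0) (map (extv d) (seq 0 (S n)))).
    { apply fold_min_ge. rewrite E; apply H.
      intros y Hy; destruct (in_map_extv d y Hy) as [i ->]; apply H. }
    lra.
Qed.

Lemma comp_bounds {n} (d : vecR n) (i : idx n) : botv d <= d i /\ d i <= topv d.
Proof.
  assert (Hin : In (d i) (map (extv d) (seq 0 n))).
  { rewrite <- extv_idx. apply in_map. apply in_seq. destruct i; simpl; lia. }
  split; [apply fold_min_le | apply le_fold_max]; auto.
Qed.

Lemma ball_iff {n} (F : vecT n -> vecT n) z r : diagonal_free F -> r >= 0 ->
  (ball_in_S F z r <-> leTv (embed (fun i => r + z i)) (F (embed z))).
Proof.
  intros [Hop [Hh Hdf]] Hr. split.
  - intros Hb i.
    set (x := fun j : idx n => z j +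
           (if Nat.eq_dec (proj1_sig j) (proj1_sig i) then r else 0)).
    assert (Hx : hball z r x).
    { unfold hball. eapply Rle_trans; [apply hnorm_bound with (lo := 0) (hi := r); [lra|]|lra]. intros j. unfold x.
      destruct (Nat.eq_dec (proj1_sig j) (proj1_sig i)); lra. }
    specialize (Hb x Hx i).
    rewrite (Hdf i x z) in Hb.
    + unfold x in Hb. unfold embed in *.
      destruct (F (fun j => Some (z j)) i); simpl in *; [|contradiction].
      destruct (Nat.eq_dec (proj1_sig i) (proj1_sig i)); [lra|congruence].
    + intros j Hj. unfold x. destruct (Nat.eq_dec (proj1_sig j) (proj1_sig i)) as [e|].
      * exfalso. apply Hj, idx_eq, e.
      * lra.
  - intros H x Hx i.
    set (d := fun j => x j - z j).
    set (b := botv d).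
    assert (Hd : forall j, b <= d j <= b + r).
    { intros j. destruct (comp_bounds d j). unfold hball, hnorm in Hx.
      fold d in Hx. unfold b. lra. }
    assert (Hle : leTv (fun j => addT (Some b) (embed z j)) (embed x)).
    { intros j. simpl. specialize (Hd j). unfold d in Hd. lra. }
    specialize (Hop _ _ Hle i). rewrite Hh in Hop.
    specialize (H i). specialize (Hd i). unfold d in Hd.
    unfold embed in *. simpl in *.
    destruct (F (fun j => Some (z j)) i) as [w|]; simpl in *; [|contradiction].
    destruct (F (fun j => Some (x j)) i) as [v|]; simpl in *; [|contradiction].
    lra.
Qed.

Lemma ER_le_trans a b c : ER_le a b -> ER_le b c -> ER_le a c.
Proof. destruct a, b, c; simpl; intros; try lra; auto; contradiction. Qed.

Lemma ER_le_antisym a b : ER_le a b -> ER_le b a -> a = b.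
Proof. destruct a, b; simpl; intros; try contradiction; auto. f_equal; lra. Qed.

Lemma cw_down {n} (F : vecT n -> vecT n) mu mu' z :
  mu' <= mu -> leTv (embed (fun i => mu + z i)) (F (embed z)) ->
  leTv (embed (fun i => mu' + z i)) (F (embed z)).
Proof.
  intros Hm H i. specialize (H i). unfold embed in *.
  destruct (F (fun j => Some (z j)) i); simpl in *; [lra|contradiction].
Qed.

Theorem mainTheorem6 (n : nat) (F : vecT n -> vecT n) (c : ER) :
  diagonal_free F ->
  is_lower_cw F c ->
  ((exists (z : vecR n) (r : R), r > 0 /\ ball_in_S F z r) <-> ER_lt (Fin 0) c) /\
  (ER_lt (Fin 0) c ->
     is_sup (fun r => r >= 0 /\ exists z : vecR n, ball_in_S F z r) c).
Proof.
  intros HF [Hub Hlub].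
  assert (P1 : (exists (z : vecR n) (r : R), r > 0 /\ ball_in_S F z r) <-> ER_lt (Fin 0) c).
  { split.
    - intros [z [r [Hr Hb]]].
      apply (ball_iff F z r HF) in Hb; [|lra].
      assert (Hc : ER_le (Fin r) c) by (apply Hub; eauto).
      split.
      + eapply ER_le_trans; [|exact Hc]. simpl; lra.
      + intros <-. simpl in Hc. lra.
    - intros [H0 Hne].
      destruct (Classical_Prop.classic (exists mu, mu > 0 /\
          exists z : vecR n, leTv (embed (fun i => mu + z i)) (F (embed z))))
        as [[mu [Hmu [z Hz]]]|Hno].
      + exists z, mu. split; auto. apply (ball_iff F z mu HF); auto; lra.
      + exfalso. apply Hne. apply ER_le_antisym; auto.
        apply Hlub. intros a Ha. simpl.
        destruct (Rle_dec a 0); auto. exfalso. apply Hno. exists a. split; auto; lra. }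
  split; auto.
  intros Hc. split.
  - intros a [Ha [z Hz]]. apply Hub. exists z. apply (ball_iff F z a HF); auto.
  - intros u Hu. apply Hlub. intros mu [z Hz].
    destruct (Rle_dec 0 mu) as [Hm|Hm].
    + apply Hu. split; [lra|]. exists z. apply (ball_iff F z mu HF); auto; lra.
    + destruct (proj2 P1 Hc) as [z0 [r0 [Hr0 Hb0]]].
      apply ER_le_trans with (Fin r0); [simpl; lra|].
      apply Hu. split; [lra|]. eauto.
Qed.
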